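(* Let $\lambda$ be a strict partition and $c$ an integer with $1\le c<\ell(\lambda)$. Then the expected number of horizontal adjacencies lying in column $c$ of a uniformly random shifted standard Young tableau of shape $[\lambda]^{\mathrm{sh}}$ equals $1$.
   Context: For strict $\lambda=(\lambda_1>\dots>\lambda_\ell>0)$, $[\lambda]^{\mathrm{sh}}=\{(i,j+i-1):i\in[\ell],j\in[\lambda_i]\}$ (row $i$, column $j$). A shifted standard Young tableau is a bijection $T:[\lambda]^{\mathrm{sh}}\to[|\lambda|]$ increasing along rows and columns. For $u=(i,j)$, $(T,u)$ is a horizontal adjacency if $(i,j+1)\in[\lambda]^{\mathrm{sh}}$ and $T(i,j+1)=T(u)+1$; it lies in column $j$. *)

(* Defs.v *)
From HB Require Import structures.
From mathcomp Require Import all_boot all_order all_algebra.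
Set Implicit Arguments. Unset Strict Implicit. Unset Printing Implicit Defensive.
Import Order.TTheory GRing.Theory Num.Theory.

(* A strict partition: a strictly decreasing list of positive integers
   la = [:: la_1; ...; la_l].  Rows and columns are 1-based. *)
Definition strict_partition (la : seq nat) : bool :=
  sorted (fun x y => y < x) la && all (fun x => 0 < x) la.

(* (i, j) is in the shifted diagram [la]^sh = {(i, k+i-1) : i in [l], k in [la_i]},
   i.e. 1 <= i <= l and i <= j <= la_i + i - 1. *)
Definition in_shape_nat (la : seq nat) (i j : nat) : bool :=
  [&& 1 <= i, i <= size la, i <= j & j < nth 0 la i.-1 + i].

(* Every cell of [la]^sh has both coordinates <= |la|, so cells are encoded
   inside 'I_(|la|+1) x 'I_(|la|+1). *)
Definition cell (la : seq nat) := ('I_(sumn la).+1 * 'I_(sumn la).+1)%type.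

Definition in_shape (la : seq nat) (u : cell la) : bool := in_shape_nat la u.1 u.2.

Definition Tv (la : seq nat) (T : {ffun cell la -> 'I_(sumn la).+1}) (i j : nat) : nat :=
  val (T (inord i, inord j)).

(* T is a shifted standard Young tableau of shape la: restricted to [la]^sh it is
   a bijection onto [|la|] = {1..|la|}, increasing along rows and columns; outside
   the shape it is 0 (normalisation so that tableaux are in bijection with such T). *)
Definition is_shifted_SYT (la : seq nat) (T : {ffun cell la -> 'I_(sumn la).+1}) : bool :=
  [&& [forall u, ~~ in_shape u ==> (val (T u) == 0)],
      [forall u, in_shape u ==> (0 < val (T u))],
      [forall u, forall v, [&& in_shape u, in_shape v & T u == T v] ==> (u == v)],
      [forall k : 'I_(sumn la).+1, (0 < val k) ==> [exists u, in_shape u && (T u == k)]],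
      [forall u, forall v, [&& in_shape u, in_shape v, u.1 == v.1 & (val u.2 < val v.2)]
                            ==> (val (T u) < val (T v))] &
      [forall u, forall v, [&& in_shape u, in_shape v, u.2 == v.2 & (val u.1 < val v.1)]
                            ==> (val (T u) < val (T v))]].

Definition shifted_SYTs (la : seq nat) : {set {ffun cell la -> 'I_(sumn la).+1}} :=
  [set T | is_shifted_SYT T].

Definition horiz_adj (la : seq nat) (T : {ffun cell la -> 'I_(sumn la).+1}) (u : cell la) : bool :=
  [&& in_shape u, in_shape_nat la u.1 (val u.2).+1 &
      Tv T u.1 (val u.2).+1 == (val (T u)).+1].

Definition num_hadj_col (la : seq nat) (T : {ffun cell la -> 'I_(sumn la).+1}) (c : nat) : nat :=
  #|[set u : cell la | (val u.2 == c) && horiz_adj T u]|.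

(* Main.v *)
Require Import Defs.
From HB Require Import structures.
From mathcomp Require Import all_boot all_order all_algebra.
From mathcomp Require Import fingroup perm zify.
Import Order.TTheory GRing.Theory Num.Theory.
Set Implicit Arguments. Unset Strict Implicit. Unset Printing Implicit Defensive.

Section Aux.
Variable la : seq nat.
Local Notation n := (sumn la).
Local Notation F := {ffun cell la -> 'I_(sumn la).+1}.

Lemma nth_bound : all (fun x => 0 < x) la -> forall i, i < size la -> nth 0 la i + i <= n.
Proof.
elim: la => [//|a l IH] /= /andP[a0 al] [|i] /=; first by rewrite addn0 leq_addr.
move=> /(IH al) h; lia.
Qed.

Lemma shape_bound i j : all (fun x => 0 < x) la -> in_shape_nat la i j -> (i <= n) && (j <= n).
Proof.
move=> ha /and4P[i1 il ij jl].
have := nth_bound ha (i := i.-1) ltac:(lia). lia.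
Qed.

Lemma col_bound : strict_partition la -> forall i, i < size la -> size la <= nth 0 la i + i.
Proof.
rewrite /strict_partition; elim: la => [//|a l IH] /= /andP[hs /andP[a0 al]].
have sl : sorted (fun x y => y < x) l by exact: path_sorted hs.
move=> [|i] /=.
  case: l hs sl al IH => [|b l'] /= hs sl al IH; first lia.
  move: hs => /andP[ba _]. have := IH ltac:(by rewrite sl al) 0 isT; simpl; lia.
move=> hi; have := IH ltac:(by rewrite sl al) i hi; lia.
Qed.

Variable T : F.
Hypothesis hT : is_shifted_SYT T.

Ltac syt_unf := move: hT; rewrite /is_shifted_SYT => /and5P[/forallP h1 /forallP h2 /forallP h3 /forallP h4 /andP[/forallP h5 /forallP h6]].
Lemma syt_out u : ~~ in_shape u -> nat_of_ord (T u) = 0.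
Proof. syt_unf; by move=> /(implyP (h1 u))/eqP. Qed.
Lemma syt_pos u : in_shape u -> 0 < nat_of_ord (T u).
Proof. syt_unf; by move=> /(implyP (h2 u)). Qed.
Lemma syt_inj u v : in_shape u -> in_shape v -> T u = T v -> u = v.
Proof. syt_unf; move=> hu hv e; have /forallP/(_ v)/implyP := h3 u.
  by rewrite hu hv e eqxx => /(_ isT)/eqP. Qed.
Lemma syt_surj (k : 'I_n.+1) : 0 < nat_of_ord k -> exists2 u, in_shape u & T u = k.
Proof. syt_unf; move=> k0; have /implyP/(_ k0)/existsP[u /andP[hu /eqP e]] := h4 k; by exists u. Qed.
Lemma syt_row u v : in_shape u -> in_shape v -> u.1 = v.1 -> nat_of_ord u.2 < nat_of_ord v.2 -> nat_of_ord (T u) < nat_of_ord (T v).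
Proof. syt_unf; move=> hu hv e l; have /forallP/(_ v)/implyP := h5 u.
  by rewrite hu hv e eqxx l; apply. Qed.
Lemma syt_col u v : in_shape u -> in_shape v -> u.2 = v.2 -> nat_of_ord u.1 < nat_of_ord v.1 -> nat_of_ord (T u) < nat_of_ord (T v).
Proof. syt_unf; move=> hu hv e l; have /forallP/(_ v)/implyP := h6 u.
  by rewrite hu hv e eqxx l; apply. Qed.
End Aux.

Lemma mk_syt la (T : {ffun cell la -> 'I_(sumn la).+1}) :
  (forall u, ~~ in_shape u -> nat_of_ord (T u) = 0) ->
  (forall u, in_shape u -> 0 < nat_of_ord (T u)) ->
  (forall u v, in_shape u -> in_shape v -> T u = T v -> u = v) ->
  (forall k : 'I_(sumn la).+1, 0 < nat_of_ord k -> exists2 u, in_shape u & T u = k) ->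
  (forall u v, in_shape u -> in_shape v -> u.1 = v.1 -> nat_of_ord u.2 < nat_of_ord v.2 -> nat_of_ord (T u) < nat_of_ord (T v)) ->
  (forall u v, in_shape u -> in_shape v -> u.2 = v.2 -> nat_of_ord u.1 < nat_of_ord v.1 -> nat_of_ord (T u) < nat_of_ord (T v)) ->
  is_shifted_SYT T.
Proof.
move=> h1 h2 h3 h4 h5 h6; rewrite /is_shifted_SYT.
apply/and5P; split.
- by apply/forallP=> u; apply/implyP=> hu; apply/eqP; exact: h1 hu.
- by apply/forallP=> u; apply/implyP=> /h2.
- apply/forallP=> u; apply/forallP=> v; apply/implyP=> /and3P[hu hv /eqP e].
  by rewrite (h3 _ _ hu hv e).
- apply/forallP=> k; apply/implyP=> /h4[u hu e]; apply/existsP; exists u; by rewrite hu e eqxx.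
- apply/andP; split; apply/forallP=> u; apply/forallP=> v; apply/implyP=> /and4P[hu hv /eqP e l].
  + exact: h5.
  + exact: h6.
Qed.

Section Main.
Variables (la : seq nat) (c : nat).
Hypotheses (hla : strict_partition la) (c1 : 1 <= c) (cl : c < size la).
Local Notation n := (sumn la).
Local Notation F := {ffun cell la -> 'I_(sumn la).+1}.

Lemma hpos : all (fun x => 0 < x) la.
Proof. by case/andP: hla. Qed.

Definition mkcell (i j : nat) : cell la := (inord i, inord j).

Lemma mkcellP i j : in_shape_nat la i j ->
  [/\ in_shape (mkcell i j), nat_of_ord (mkcell i j).1 = i & nat_of_ord (mkcell i j).2 = j].
Proof.
move=> h; have /andP[bi bj] := shape_bound hpos h.
rewrite /mkcell /= !inordK; try lia. by split => //; rewrite /in_shape /= !inordK //; lia.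
Qed.

Lemma cellE (u : cell la) : u = mkcell u.1 u.2.
Proof. by case: u => a b; rewrite /mkcell /= !inord_val. Qed.

Definition colle (T : F) (k : nat) := [exists u : cell la, [&& in_shape u, nat_of_ord (T u) == k & nat_of_ord u.2 <= c]].
Definition colgt (T : F) (k : nat) := [exists u : cell la, [&& in_shape u, nat_of_ord (T u) == k & c < nat_of_ord u.2]].
Definition upT (T : F) (k : 'I_n) := [&& 0 < nat_of_ord k, colle T k & colgt T k.+1].
Definition downT (T : F) (k : 'I_n) := [&& 0 < nat_of_ord k, colgt T k & colle T k.+1].
Definition adjk (T : F) (k : 'I_n) := [exists u, [&& nat_of_ord u.2 == c, horiz_adj T u & nat_of_ord (T u) == k]].

Lemma colgtE T k : is_shifted_SYT T -> 0 < k <= n -> colgt T k = ~~ colle T k.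
Proof.
move=> hT hk; have ik : (inord k : 'I_n.+1) = k :> nat by rewrite inordK //; lia.
have [u hu e] : exists2 u, in_shape u & T u = inord k by apply: (syt_surj hT); rewrite ik; lia.
have eu : nat_of_ord (T u) = k by rewrite e ik.
have uniq v : in_shape v -> nat_of_ord (T v) == k -> v = u.
  move=> hv /eqP ev; apply: (syt_inj hT hv hu); apply: ord_inj; by rewrite ev eu.
apply/idP/idP.
- case/existsP=> v /and3P[hv ev cv]; rewrite (uniq v hv ev) in cv.
  apply/negP; case/existsP=> w /and3P[hw ew cw]; rewrite (uniq w hw ew) in cw; lia.
- move=> /negP nc; apply/existsP; exists u; rewrite hu eu eqxx /=.
  rewrite ltnNge; apply/negP=> cu; apply: nc; apply/existsP; exists u; by rewrite hu eu eqxx cu.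
Qed.

Lemma tele (b : nat -> bool) m : 0 < m ->
  \sum_(k < m) ((0 < k) && b k && ~~ b k.+1) + b m = \sum_(k < m) ((0 < k) && ~~ b k && b k.+1) + b 1.
Proof.
elim: m => [//|m IH] _; case: m IH => [|m] IH; first by rewrite !big_ord1.
rewrite !(big_ord_recr m.+1) /=.
have := IH isT. case: (b m.+1); case: (b m.+2); simpl; lia.
Qed.

Lemma nth_dec i : i.+1 < size la -> nth 0 la i.+1 < nth 0 la i.
Proof.
move: hla; rewrite /strict_partition => /andP[hs _].
elim: la hs i => [//|a l IH] /= hs [|i] /=.
  by case: l hs IH => [//|b l'] /= /andP[].
move=> hi; apply: IH => //; exact: path_sorted hs.
Qed.

Lemma nth_pos i : i < size la -> 0 < nth 0 la i.
Proof. by move=> hi; have /allP := hpos; apply; exact: mem_nth. Qed.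

Lemma n_pos : 0 < n.
Proof.
have s0 : 0 < size la by lia.
have := nth_bound hpos s0; have := nth_pos s0; lia.
Qed.

Lemma colle1 T : is_shifted_SYT T -> colle T 1.
Proof.
move=> hT.
have n1 := n_pos.
have ik : (inord 1 : 'I_n.+1) = 1 :> nat by rewrite inordK //; lia.
have [u hu e] : exists2 u, in_shape u & T u = inord 1 by apply: (syt_surj hT); rewrite ik.
have eu : nat_of_ord (T u) = 1 by rewrite e ik.
apply/existsP; exists u; rewrite hu eu eqxx /=.
have hs := hu; move: hs; rewrite /in_shape => /and4P[i1 il ij jl].
have ji : nat_of_ord u.2 = u.1.
  apply/eqP; rewrite eqn_leq ij andbT leqNgt; apply/negP => lt.
  have hw : in_shape_nat la u.1 (u.2).-1 by apply/and4P; split => //; lia.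
  have [hw1 hw2 hw3] := mkcellP hw.
  have := syt_row hT hw1 hu ltac:(by rewrite /mkcell /= inord_val) ltac:(rewrite hw3; lia).
  have := syt_pos hT hw1; lia.
suff : nat_of_ord u.1 = 1 by lia.
apply/eqP; rewrite eqn_leq i1 andbT leqNgt; apply/negP => lt.
have d := nth_dec (i := (u.1).-2) ltac:(lia).
have p := nth_pos (i := (u.1).-1) ltac:(lia).
have hw : in_shape_nat la (u.1).-1 u.1.
  apply/and4P; split; try lia.
  have e2 : (u.1).-2.+1 = (u.1).-1 by lia.
  rewrite e2 in d; lia.
have [hw1 hw2 hw3] := mkcellP hw.
have := syt_col hT hw1 hu ltac:(by rewrite /mkcell /= -ji inord_val) ltac:(rewrite hw2; lia).
have := syt_pos hT hw1; lia.
Qed.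

Lemma collen T : is_shifted_SYT T -> ~~ colle T n.
Proof.
move=> hT.
have ik : (inord n : 'I_n.+1) = n :> nat by rewrite inordK //; lia.
have n1 := n_pos.
have [u hu e] : exists2 u, in_shape u & T u = inord n by apply: (syt_surj hT); rewrite ik.
have eu : nat_of_ord (T u) = n by rewrite e ik.
have cu : c < u.2.
  have hs := hu; move: hs; rewrite /in_shape => /and4P[i1 il ij jl].
  have cb := col_bound hla (i := (u.1).-1) ltac:(lia).
  case hw: (in_shape_nat la u.1 (u.2).+1).
    have [hw1 hw2 hw3] := mkcellP hw.
    have := syt_row hT hu hw1 ltac:(by rewrite /mkcell /= inord_val) ltac:(rewrite hw3; lia).
    have := ltn_ord (T (mkcell u.1 (u.2).+1)); lia.
  move: hw; rewrite /in_shape_nat i1 il /= => /negbT; rewrite negb_and -!ltnNge; lia.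
apply/negP => /existsP[v /and3P[hv /eqP ev cv]].
have uv : v = u by apply: (syt_inj hT hv hu); apply: ord_inj; rewrite ev eu.
rewrite uv in cv; lia.
Qed.

Definition swT (T : F) (k : 'I_n) : F :=
  [ffun u => tperm (widen_ord (leqnSn n) k) (inord k.+1) (T u)].

Definition swn (k x : nat) := if x == k then k.+1 else if x == k.+1 then k else x.

Lemma swv T (k : 'I_n) u : nat_of_ord (swT T k u) = swn k (T u).
Proof.
have ik : (inord k.+1 : 'I_n.+1) = k.+1 :> nat by rewrite inordK //; have := ltn_ord k; lia.
rewrite /swT ffunE /swn; case: tpermP => [->|->|ne1 ne2] /=.
- by rewrite eqxx ik.
- by rewrite ik eqxx; case: eqP => //; lia.
- case: eqP => [e|_]; first by case: ne1; apply: ord_inj; rewrite e.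
  case: eqP => [e|_] //; by case: ne2; apply: ord_inj; rewrite e ik.
Qed.

Lemma swK T k : swT (swT T k) k = T.
Proof. by apply/ffunP => u; rewrite !ffunE tpermK. Qed.

Ltac ifs := repeat (case: ifP => /eqP ?).
Lemma swn_eq1 k x : (swn k x == k) = (x == k.+1).
Proof. rewrite /swn; ifs; apply/eqP/eqP; lia. Qed.
Lemma swn_eq2 k x : (swn k x == k.+1) = (x == k).
Proof. rewrite /swn; ifs; apply/eqP/eqP; lia. Qed.
Lemma swn_mono k x y : x < y -> ~~ ((x == k) && (y == k.+1)) -> swn k x < swn k y.
Proof.
move=> l h; have h' : ~ (x = k /\ y = k.+1) by case=> e1 e2; rewrite e1 e2 !eqxx in h.
rewrite /swn; ifs; lia.
Qed.
Lemma swn0 k x : 0 < k -> (swn k x == 0) = (x == 0).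
Proof. move=> k0; rewrite /swn; ifs; apply/eqP/eqP; lia. Qed.

Lemma sw_syt T (k : 'I_n) : is_shifted_SYT T -> 0 < k ->
  (forall u v, in_shape u -> in_shape v -> u.1 = v.1 -> nat_of_ord (T u) = k -> nat_of_ord (T v) = k.+1 -> False) ->
  (forall u v, in_shape u -> in_shape v -> u.2 = v.2 -> nat_of_ord (T u) = k -> nat_of_ord (T v) = k.+1 -> False) ->
  is_shifted_SYT (swT T k).
Proof.
move=> hT k0 nr nc; apply: mk_syt.
- by move=> u hu; apply/eqP; rewrite swv swn0 // (syt_out hT hu).
- move=> u hu; rewrite swv lt0n swn0 // -lt0n; exact: syt_pos.
- move=> u v hu hv; rewrite /swT !ffunE => /perm_inj; exact: syt_inj.
- move=> m m0.
  set a := widen_ord (leqnSn n) k; set b := (inord k.+1 : 'I_n.+1).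
  have [u hu e] : exists2 u, in_shape u & T u = tperm a b m.
    apply: (syt_surj hT).
    have := swv [ffun=> m] k (mkcell 0 0); rewrite /swT !ffunE => ->.
    by rewrite lt0n swn0 // -lt0n.
  by exists u; rewrite // /swT ffunE e tpermK.
- move=> u v hu hv e l; rewrite !swv; apply: swn_mono; first exact: syt_row.
  by apply/negP => /andP[/eqP a /eqP b]; apply: (nr u v).
- move=> u v hu hv e l; rewrite !swv; apply: swn_mono; first exact: syt_col.
  by apply/negP => /andP[/eqP a /eqP b]; apply: (nc u v).
Qed.

Lemma colle_sw1 T (k : 'I_n) : colle (swT T k) k = colle T k.+1.
Proof. by apply: eq_existsb => u; rewrite swv swn_eq1. Qed.
Lemma colle_sw2 T (k : 'I_n) : colle (swT T k) k.+1 = colle T k.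
Proof. by apply: eq_existsb => u; rewrite swv swn_eq2. Qed.
Lemma colgt_sw1 T (k : 'I_n) : colgt (swT T k) k = colgt T k.+1.
Proof. by apply: eq_existsb => u; rewrite swv swn_eq1. Qed.
Lemma colgt_sw2 T (k : 'I_n) : colgt (swT T k) k.+1 = colgt T k.
Proof. by apply: eq_existsb => u; rewrite swv swn_eq2. Qed.

Lemma colleP T k : colle T k -> exists2 u : cell la, in_shape u & (nat_of_ord (T u) = k /\ nat_of_ord u.2 <= c).
Proof. by case/existsP => u /and3P[a /eqP b d]; exists u. Qed.
Lemma colgtP T k : colgt T k -> exists2 u : cell la, in_shape u & (nat_of_ord (T u) = k /\ c < nat_of_ord u.2).
Proof. by case/existsP => u /and3P[a /eqP b d]; exists u. Qed.
Lemma adjkP T k : adjk T k -> exists2 u : cell la, horiz_adj T u & (nat_of_ord (T u) = k /\ nat_of_ord u.2 = c).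
Proof. by case/existsP => u /and3P[/eqP a b /eqP d]; exists u. Qed.

Lemma up_down T k : is_shifted_SYT T -> upT T k -> ~~ adjk T k ->
  is_shifted_SYT (swT T k) && downT (swT T k) k.
Proof.
move=> hT /and3P[k0 /colleP[u0 hu0 [eu0 cu0]] /colgtP[v0 hv0 [ev0 cv0]]] na.
have U u : in_shape u -> nat_of_ord (T u) = k -> u = u0.
  by move=> hu e; apply: (syt_inj hT hu hu0); apply: ord_inj; rewrite e eu0.
have V v : in_shape v -> nat_of_ord (T v) = k.+1 -> v = v0.
  by move=> hv e; apply: (syt_inj hT hv hv0); apply: ord_inj; rewrite e ev0.
apply/andP; split; last first.
  rewrite /downT k0 colgt_sw1 colle_sw2 /=; apply/andP; split; apply/existsP.
  - by exists v0; rewrite hv0 ev0 eqxx.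
  - by exists u0; rewrite hu0 eu0 eqxx.
apply: sw_syt => //; last first.
  move=> u v hu hv e eu ev; rewrite (U u hu eu) (V v hv ev) in e; move: cu0 cv0; rewrite e; lia.
move=> u v hu hv e eu ev; rewrite (U u hu eu) (V v hv ev) in e.
have lt : nat_of_ord u0.2 < v0.2 by lia.
have sh0 := hv0; move: sh0; rewrite /in_shape => /and4P[i1 il ij jl].
have nxt : nat_of_ord v0.2 = (u0.2).+1.
  apply/eqP; rewrite eqn_leq lt andbT leqNgt; apply/negP => lt2.
  have hw : in_shape_nat la u0.1 (u0.2).+1.
    have sh1 := hu0; move: sh1; rewrite /in_shape => /and4P[i1' il' ij' jl'].
    have e' : nat_of_ord u0.1 = nat_of_ord v0.1 := f_equal (@nat_of_ord _) e.
    rewrite -e' in jl; apply/and4P; split; lia.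
  have [hw1 hw2 hw3] := mkcellP hw.
  have := syt_row hT hu0 hw1 ltac:(by rewrite /mkcell /= inord_val) ltac:(rewrite hw3; lia).
  have := syt_row hT hw1 hv0 ltac:(by rewrite /mkcell /= inord_val) ltac:(rewrite hw3; lia).
  lia.
have cc : nat_of_ord u0.2 = c by lia.
move/negP: na; apply; apply/existsP; exists u0; rewrite cc eqxx eu0 eqxx andbT /=.
have hw : in_shape_nat la u0.1 (u0.2).+1.
  by move: hv0; rewrite /in_shape -e nxt.
rewrite /horiz_adj hu0 hw /Tv /=.
have -> : ((inord u0.1, inord (u0.2).+1) : cell la) = v0.
  by rewrite (cellE v0) /mkcell e nxt.
by rewrite ev0 eu0.
Qed.

Lemma down_up T k : is_shifted_SYT T -> downT T k ->
  [&& is_shifted_SYT (swT T k), upT (swT T k) k & ~~ adjk (swT T k) k].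
Proof.
move=> hT /and3P[k0 /colgtP[u0 hu0 [eu0 cu0]] /colleP[v0 hv0 [ev0 cv0]]].
have U u : in_shape u -> nat_of_ord (T u) = k -> u = u0.
  by move=> hu e; apply: (syt_inj hT hu hu0); apply: ord_inj; rewrite e eu0.
have V v : in_shape v -> nat_of_ord (T v) = k.+1 -> v = v0.
  by move=> hv e; apply: (syt_inj hT hv hv0); apply: ord_inj; rewrite e ev0.
apply/and3P; split.
- apply: sw_syt => //.
  + move=> u v hu hv e eu ev; rewrite (U u hu eu) (V v hv ev) in e.
    have := syt_row hT hv0 hu0 (esym e) ltac:(lia); lia.
  + move=> u v hu hv e eu ev; rewrite (U u hu eu) (V v hv ev) in e; move: cu0 cv0; rewrite e; lia.
- rewrite /upT k0 colle_sw1 colgt_sw2 /=; apply/andP; split; apply/existsP.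
  + by exists v0; rewrite hv0 ev0 eqxx.
  + by exists u0; rewrite hu0 eu0 eqxx.
- apply/negP => /adjkP[u /and3P[hu hw /eqP ew] [eu cu]].
  have {}hw : in_shape_nat la u.1 (nat_of_ord u.2).+1 := hw.
  have {}ew : nat_of_ord (swT T k (mkcell u.1 (u.2).+1)) = (nat_of_ord (swT T k u)).+1 := ew.
  rewrite swv in eu; rewrite !swv eu in ew.
  have eu' : nat_of_ord (T u) = k.+1 by apply/eqP; rewrite -swn_eq1 eu.
  have ew' : nat_of_ord (T (mkcell u.1 (u.2).+1)) = k by apply/eqP; rewrite -swn_eq2 ew.
  have [hw1 hw2 hw3] := mkcellP hw.
  have := syt_row hT hu hw1 ltac:(by rewrite /mkcell /= inord_val) ltac:(by rewrite hw3).
  lia.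
Qed.

Lemma adj_up T k : is_shifted_SYT T -> adjk T k -> upT T k.
Proof.
move=> hT /adjkP[u /and3P[hu hw /eqP ew] [eu cu]].
have {}hw : in_shape_nat la u.1 (nat_of_ord u.2).+1 := hw.
have {}ew : nat_of_ord (T (mkcell u.1 (u.2).+1)) = (nat_of_ord (T u)).+1 := ew.
have [hw1 hw2 hw3] := mkcellP hw.
apply/and3P; split.
- by rewrite -eu; exact: syt_pos.
- by apply/existsP; exists u; rewrite hu eu cu leqnn eqxx.
- apply/existsP; exists (mkcell u.1 (u.2).+1); rewrite hw1 ew eu eqxx hw3 cu /=; lia.
Qed.

Lemma sum_bool (I : finType) (P : pred I) : \sum_(i : I) (P i : nat) = #|P|.
Proof.
rewrite (eq_bigr (fun i => if P i then 1 else 0)); last by move=> i _; case: (P i).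
by rewrite -big_mkcond /= sum1_card.
Qed.

Lemma num_adj T : is_shifted_SYT T -> num_hadj_col T c = \sum_(k < n) (adjk T k : nat).
Proof.
move=> hT; rewrite sum_bool /num_hadj_col.
set A := [set u : cell la | _].
have Tn u : u \in A -> nat_of_ord (T u) < n.
  rewrite inE => /andP[_ /and3P[hu hw /eqP ew]].
  have {}ew : nat_of_ord (T (mkcell u.1 (u.2).+1)) = (nat_of_ord (T u)).+1 := ew.
  have := ltn_ord (T (mkcell u.1 (u.2).+1)); lia.
have injT : {in A &, injective T}.
  move=> u v; rewrite !inE => /andP[_ /and3P[hu _ _]] /andP[_ /and3P[hv _ _]].
  exact: syt_inj.
have wi : injective (widen_ord (leqnSn n)).
  by move=> a b e; apply: ord_inj; exact: (congr1 (@nat_of_ord _) e).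
rewrite -(card_in_imset injT) -(card_imset _ wi); apply: eq_card => x.
apply/imsetP/imsetP.
- case=> u uA ->; exists (Ordinal (Tn u uA)); last by apply: ord_inj.
  have := uA; rewrite inE => /andP[/eqP cu hadj].
  by apply/existsP; exists u; rewrite cu hadj !eqxx.
- case=> k /adjkP[u hadj [eu cu]] ->; exists u.
    by rewrite inE hadj andbT; apply/eqP; exact: cu.
  by apply: ord_inj; rewrite eu.
Qed.

Lemma per_T T : is_shifted_SYT T -> \sum_(k < n) (upT T k : nat) = \sum_(k < n) (downT T k : nat) + 1.
Proof.
move=> hT; have := tele (colle T) n_pos.
rewrite (negbTE (collen hT)) colle1 // addn0 => E.
have E1 : \sum_(k < n) (upT T k : nat) = \sum_(k < n) ((0 < k) && colle T k && ~~ colle T k.+1).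
  apply: eq_bigr => k _; rewrite /upT; case: (posnP k) => [->//|k0].
  by rewrite colgtE //; have := ltn_ord k; lia.
have E2 : \sum_(k < n) (downT T k : nat) = \sum_(k < n) ((0 < k) && ~~ colle T k && colle T k.+1).
  apply: eq_bigr => k _; rewrite /downT; case: (posnP k) => [->//|k0].
  by rewrite colgtE //; have := ltn_ord k; lia.
by rewrite E1 E2 E.
Qed.

Definition S := shifted_SYTs la.

Lemma sum_pairs (P : F -> 'I_n -> bool) :
  \sum_(T in S) \sum_(k < n) (P T k : nat) = #|[set p : F * 'I_n | (p.1 \in S) && P p.1 p.2]|.
Proof.
rewrite (eq_bigr (fun T => \sum_(k < n | P T k) 1)); last first.
  by move=> T _; rewrite sum1_card -sum_bool.
rewrite pair_big_dep /= sum1_card; apply: eq_card => p; by rewrite inE.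
Qed.

Definition sig (p : F * 'I_n) := (swT p.1 p.2, p.2).
Lemma sigK : involutive sig.
Proof. by case=> T k; rewrite /sig /= swK. Qed.

Lemma swap_count :
  \sum_(T in S) \sum_(k < n) ((upT T k && ~~ adjk T k) : nat) = \sum_(T in S) \sum_(k < n) (downT T k : nat).
Proof.
rewrite !sum_pairs; set A := [set p | _]; set B := [set p | _].
have sAB : sig @: A \subset B.
  apply/subsetP => q /imsetP[[T k] pA ->]; move: pA; rewrite !inE /= => /andP[hT /andP[hu hna]].
  by have /andP[-> ->] := up_down hT hu hna.
have sBA : sig @: B \subset A.
  apply/subsetP => q /imsetP[[T k] pB ->]; move: pB; rewrite !inE /= => /andP[hT hd].
  by have /and3P[-> -> ->] := down_up hT hd.
have inj := can_inj sigK.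
apply/eqP; rewrite eqn_leq.
apply/andP; split.
- by rewrite -(card_imset A inj) subset_leq_card.
- by rewrite -(card_imset B inj) subset_leq_card.
Qed.

Lemma main_count : \sum_(T in S) num_hadj_col T c = #|S|.
Proof.
have E1 : \sum_(T in S) num_hadj_col T c = \sum_(T in S) \sum_(k < n) (adjk T k : nat).
  by apply: eq_bigr => T; rewrite inE => hT; rewrite num_adj.
have E2 : \sum_(T in S) \sum_(k < n) (upT T k : nat) =
  \sum_(T in S) \sum_(k < n) (adjk T k : nat) + \sum_(T in S) \sum_(k < n) ((upT T k && ~~ adjk T k) : nat).
  rewrite -big_split /=; apply: eq_bigr => T; rewrite inE => hT.
  rewrite -big_split /=; apply: eq_bigr => k _.
  case ha: (adjk T k); first by rewrite (adj_up hT ha).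
  by case: (upT T k).
have E3 : \sum_(T in S) \sum_(k < n) (upT T k : nat) =
  \sum_(T in S) \sum_(k < n) (downT T k : nat) + #|S|.
  rewrite -sum1_card -big_split /=; apply: eq_bigr => T; rewrite inE => hT; exact: per_T.
rewrite E1; have := swap_count; lia.
Qed.
End Main.

Section Exist.
Variable la : seq nat.
Hypothesis hp : all (fun x => 0 < x) la.
Local Notation n := (sumn la).
Local Notation F := {ffun cell la -> 'I_(sumn la).+1}.
Local Notation S m := (sumn (take m la)).

Lemma S_succ m : m < size la -> S m.+1 = S m + nth 0 la m.
Proof.
elim: la m => [//|a l IH] [|m] /=; first by rewrite take0 /=; lia.
by move=> h; rewrite IH //; lia.
Qed.

Lemma S_mono m m' : m <= m' -> S m <= S m'.
Proof.
elim: la m m' => [|a l IH] [|m] [|m'] //= h; try lia.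
by have := IH m m' h; lia.
Qed.

Lemma S_le m : S m <= n.
Proof. by rewrite -{2}(cat_take_drop m la) sumn_cat leq_addr. Qed.

Definition val0 i j := S i.-1 + (j - i).+1.

Lemma val0_bounds i j : in_shape_nat la i j -> S i.-1 < val0 i j <= S i.
Proof.
case/and4P => i1 il ij jl; rewrite /val0.
have e : S i = S i.-1 + nth 0 la i.-1 by rewrite -S_succ; [congr (S _); lia | lia].
rewrite e; lia.
Qed.

Lemma val0_lt i j i' j' : in_shape_nat la i j -> in_shape_nat la i' j' -> i < i' -> val0 i j < val0 i' j'.
Proof.
move=> h h' l; have := val0_bounds h; have := val0_bounds h'.
have := S_mono (m := i) (m' := i'.-1) ltac:(lia); lia.
Qed.

Lemma mkcellP' i j : in_shape_nat la i j ->
  [/\ in_shape (mkcell la i j), nat_of_ord (mkcell la i j).1 = i & nat_of_ord (mkcell la i j).2 = j].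
Proof.
move=> h; have /andP[bi bj] := shape_bound hp h.
rewrite /mkcell /= !inordK; try lia. by split => //; rewrite /in_shape /= !inordK //; lia.
Qed.

Definition T0 : F := [ffun u => if in_shape u then inord (val0 u.1 u.2) else ord0].

Lemma T0v u : in_shape u -> nat_of_ord (T0 u) = val0 u.1 u.2.
Proof.
move=> hu; rewrite ffunE hu inordK //.
apply: (leq_trans _ (ltnSn n)); apply: leq_trans (S_le u.1); by case/andP: (val0_bounds hu).
Qed.

Lemma T0_syt : is_shifted_SYT T0.
Proof.
apply: mk_syt.
- by move=> u hu; rewrite ffunE (negbTE hu).
- move=> u hu; rewrite T0v //; rewrite /val0; lia.
- move=> u v hu hv e.
  have e' : val0 u.1 u.2 = val0 v.1 v.2 by rewrite -!T0v // e.
  case: (ltngtP u.1 v.1) => l.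
  + by have := val0_lt hu hv l; lia.
  + by have := val0_lt hv hu l; lia.
  + have hs := hu; move: hs => /and4P[i1 il ij jl].
    have hs := hv; move: hs => /and4P[i1' il' ij' jl'].
    move: e'; rewrite /val0 l => e'.
    case: u v {hu hv e} l e' ij ij' i1 il jl i1' il' jl' => [a b] [a' b'] /= l e' *.
    have -> : a = a' by apply: ord_inj.
    have -> : b = b' by apply: ord_inj; lia.
    done.
- move=> k k0.
  have ex : exists i, k <= S i by exists (size la); rewrite take_size; have := ltn_ord k; lia.
  case: (ex_minnP ex) => i Pi mini.
  have i0 : 0 < i by case: i Pi {mini} => //=; rewrite take0 /=; lia.
  have isz : i <= size la by apply: mini; rewrite take_size; have := ltn_ord k; lia.
  have nP : S i.-1 < k by rewrite ltnNge; apply/negP => /mini; lia.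
  have e : S i = S i.-1 + nth 0 la i.-1 by rewrite -S_succ; [congr (S _); lia | lia].
  have hw : in_shape_nat la i (k - S i.-1 + i.-1) by apply/and4P; split; lia.
  have [hw1 hw2 hw3] := mkcellP' hw.
  exists (mkcell la i (k - S i.-1 + i.-1)) => //.
  apply: ord_inj; rewrite T0v // hw2 hw3 /val0; lia.
- move=> u v hu hv e l; rewrite !T0v // /val0.
  have e' : nat_of_ord u.1 = nat_of_ord v.1 := congr1 (@nat_of_ord _) e.
  have := hu; case/and4P => _ _ ij _; rewrite e'; lia.
- move=> u v hu hv e l; rewrite !T0v //; exact: val0_lt.
Qed.
End Exist.

Unset Implicit Arguments.
Local Open Scope ring_scope.

Theorem mainTheorem14 (la : seq nat) (c : nat) :
  strict_partition la -> (1 <= c)%N -> (c < size la)%N ->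
  (\sum_(T in shifted_SYTs la) (num_hadj_col T c)%:R) / (#|shifted_SYTs la|%:R) = 1 :> rat.
Proof.
move=> hla c1 cl.
have := main_count hla c1 cl; rewrite /S => E.
rewrite -natr_sum E divff // pnatr_eq0 -lt0n card_gt0.
apply/set0Pn; exists (T0 la); rewrite inE; apply: T0_syt; by case/andP: hla.
Qed.
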